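(* For every non-empty finite binary word $w$, the vanishing order satisfies $n_\epsilon(w) \le 2\lfloor \log_2 |w| \rfloor + 2$, where $|w|$ is the length of $w$.
   Context: Binary words are finite or infinite sequences over $\{0,1\}$; $\epsilon$ denotes the empty word. Define the map $\rho$ on binary words as follows: for $b=b_1b_2\dots$, $\rho(b)$ is obtained from $b$ by deleting every digit $b_n=0$ and replacing every digit $b_n=1$ by $0$ if $n$ is odd and by $1$ if $n$ is even (positions are counted in the original word $b$). For a finite binary word $w$, its vanishing order is $n_\epsilon(w)=\min\{k>0 : \rho^k(w)=\epsilon\}$, where $\rho^k$ is the $k$-th iterate of $\rho$. *)

(* Defs.v *)
From mathcomp Require Import all_boot.
Set Implicit Arguments. Unset Strict Implicit. Unset Printing Implicit Defensive.

(* Binary words are [seq bool] (false = 0, true = 1). *)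

(* rho_from n b : process b whose first letter sits at (1-based) position n
   of the original word. A digit 0 is deleted; a digit 1 at odd position
   becomes 0, at even position becomes 1. *)
Fixpoint rho_from (n : nat) (b : seq bool) : seq bool :=
  match b with
  | [::] => [::]
  | x :: b' => if x then (~~ odd n) :: rho_from n.+1 b'
               else rho_from n.+1 b'
  end.

Definition rho (b : seq bool) : seq bool := rho_from 1 b.

Definition is_vanishing_order (w : seq bool) (k : nat) : Prop :=
  0 < k /\ iter k rho w = [::] /\
  (forall j, 0 < j < k -> iter j rho w <> [::]).

(* Main.v *)
Require Import Defs.
From mathcomp Require Import all_boot.
From mathcomp Require Import zify.

Lemma rho2_aux (x : seq bool) : forall n m,
  (size (rho_from m (rho_from n x))).*2 <= size x + ~~ odd n.
Proof.
elim: x => [|b x IH] n m /=; first by case: (odd n).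
have := IH n.+1 m; have := IH n.+1 m.+1.
case: b => /=; case Hn: (odd n) => /=; lia.
Qed.

Lemma rho2 (x : seq bool) : (size (rho (rho x))).*2 <= size x.
Proof. by have := rho2_aux x 1 1; rewrite addn0. Qed.

Lemma iter2 (w : seq bool) t : size (iter t.*2 rho w) * 2 ^ t <= size w.
Proof.
elim: t => [|t IH]; first by rewrite muln1.
rewrite doubleS !iterS expnS.
have := rho2 (iter t.*2 rho w).
set a := size (rho (rho _)); set b := size (iter _ _ _) in IH *.
move=> H; apply: leq_trans IH.
rewrite mulnA -muln2 in H *.
by rewrite leq_mul2r H orbT.
Qed.

Theorem proposition2p1 (w : seq bool) :
  0 < size w ->
  exists k, is_vanishing_order w k /\ k <= (trunc_log 2 (size w)).*2 + 2.
Proof.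
move=> Hw.
set t := (trunc_log 2 (size w)).+1.
have Hz : iter t.*2 rho w = [::].
  have := iter2 w t.
  have := trunc_log_ltn (size w) (isT : 1 < 2).
  rewrite -/t => Hlt Hle.
  apply/nilP; rewrite /nilp eqn0Ngt; apply/negP => Hpos.
  have : 2 ^ t <= size (iter t.*2 rho w) * 2 ^ t by rewrite leq_pmull.
  move=> H; have := leq_trans H Hle; rewrite leqNgt Hlt //.
have Hex : exists k, (0 < k) && (iter k rho w == [::]).
  by exists t.*2; rewrite Hz eqxx andbT double_gt0.
case: (ex_minnP Hex) => k /andP [Hk0 /eqP Hk] Hmin.
exists k; split; [split; [done|split; [done|]]|].
  move=> j /andP [Hj0 Hjk] Hj.
  have := Hmin j; rewrite Hj0 Hj eqxx => /(_ isT); lia.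
have := Hmin t.*2; rewrite Hz eqxx andbT double_gt0 => /(_ isT).
rewrite /t; lia.
Qed.
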